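(* Let $R$ be $R_d$ or $R_{d,\mathrm{str}}$. Let $X,S\in\operatorname{rep}(Q)$, let $V\subseteq\Phi(X)$ and $W\subseteq\Phi(S)$ be $R$-submodules, and let $T\in\operatorname{Mod}(R)$. Then $\operatorname{Ext}^2_R(W,T)=0$ and $\operatorname{Ext}^2_R(T,\Phi(X)/V)=0$.
   Context: $K=\mathbb{C}$; $Q$ a finite quiver, $\operatorname{rep}(Q)$ its finite-dimensional representations, $\operatorname{Mod}(R)$ the finite-dimensional $R$-modules. For $d\geqslant1$, $Q_d$ has vertices $v(Q)\times\{1,\dots,d\}$, arrows $(i,r)\to(i,r+1)$ ($r\leqslant d-1$) and $(i,r)\to(j,r)$ for each arrow $i\to j$ of $Q$, $r\in\{1,\dots,d\}$. For $d\geqslant2$, $Q_{d,\mathrm{str}}$ has the same vertices and vertical arrows and arrows $(i,r)\to(j,r-1)$ for each arrow $i\to j$, $r\in\{2,\dots,d\}$. $R_d=KQ_d/I$, $R_{d,\mathrm{str}}=KQ_{d,\mathrm{str}}/I$ with $I$ the ideal identifying all paths with equal source and target. $\Phi:\operatorname{rep}(Q)\to\operatorname{Mod}(R)$: $\Phi(X)_{(i,r)}=X_i$, identity maps on vertical arrows, $X_{i\to j}$ on arrows coming from $i\to j$. *)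

(* Defs.v *)
(* Finite-dimensional modules over the bound quiver algebras
   R_d = K Q_d / I and R_{d,str} = K Q_{d,str} / I, encoded (as usual) as
   representations of Q_d resp. Q_{d,str} satisfying the relations of I.
   Linear maps are matrices acting on row vectors: x |-> x *m A. *)
From HB Require Import structures.
From mathcomp Require Import all_boot all_algebra.
From mathcomp Require Import complex reals Rstruct.
Set Implicit Arguments.
Unset Strict Implicit.
Unset Printing Implicit Defensive.
Import GRing.Theory.
Local Open Scope ring_scope.

Definition CC : fieldType := (Rdefinitions.R)[i].

Section BoundQuiver.
Variable K : fieldType.

Variables (V A : finType) (s t : A -> V).

Record qrep := QRep {
  qdim : V -> nat;
  qmap : forall a : A, 'M[K]_(qdim (s a), qdim (t a)) }.

(* Layers {1,..,d} are encoded as 0,..,d-1 (nat), all higher layers carry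
   the zero space.  [str = false] : R_d, horizontal arrows (i,r) -> (j,r);
   [str = true] : R_{d,str}, horizontal arrows (i,r+1) -> (j,r). *)
Definition lay (str : bool) (r : nat) : nat := if str then r.+1 else r.

(* Underlying data of a representation of Q_d / Q_{d,str}:
   mvert i r  : vertical arrow (i,r) -> (i,r+1),
   mhor a r   : the arrow coming from a : i -> j, namely
                (i,r) -> (j,r)   (str = false) or (i,r+1) -> (j,r) (str = true). *)
Record lrep (str : bool) := LRep {
  mdim : V -> nat -> nat;
  mvert : forall i r, 'M[K]_(mdim i r, mdim i r.+1);
  mhor : forall a r, 'M[K]_(mdim (s a) (lay str r), mdim (t a) r) }.

(* The commutativity relations generating I (all parallel paths equal). *)
Definition lcomm (d : nat) (str : bool) (mdim : V -> nat -> nat)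
    (mvert : forall i r, 'M[K]_(mdim i r, mdim i r.+1)) :
    (forall a r, 'M[K]_(mdim (s a) (lay str r), mdim (t a) r)) -> Prop :=
  match str return (forall a r, 'M[K]_(mdim (s a) (lay str r), mdim (t a) r)) -> Prop with
  | false => fun h => forall a r, (r.+1 < d)%N ->
       h a r *m mvert (t a) r = mvert (s a) r *m h a r.+1
  | true => fun h => forall a r, (r.+2 < d)%N ->
       h a r *m mvert (t a) r = mvert (s a) r.+1 *m h a r.+1
  end.

Definition is_Rmod (d : nat) (str : bool) (M : lrep str) : Prop :=
  (forall i r, (d <= r)%N -> mdim M i r = 0%N) /\
  lcomm d (@mvert str M) (@mhor str M).

Definition is_hom (str : bool) (M N : lrep str)
    (f : forall i r, 'M[K]_(mdim M i r, mdim N i r)) : Prop :=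
  (forall i r, mvert M i r *m f i r.+1 = f i r *m mvert N i r) /\
  (forall a r, mhor M a r *m f (t a) r = f (s a) (lay str r) *m mhor N a r).

Record rhom (str : bool) (M N : lrep str) := Hom {
  hmap :> forall i r, 'M[K]_(mdim M i r, mdim N i r);
  hmapP : is_hom hmap }.

Definition hinj str (M N : lrep str) (f : rhom M N) : Prop :=
  forall i r, row_free (f i r).
Definition hsurj str (M N : lrep str) (f : rhom M N) : Prop :=
  forall i r, row_full (f i r).

Definition ses str (L M N : lrep str) (f : rhom L M) (g : rhom M N) : Prop :=
  hinj f /\ hsurj g /\ forall i r, (f i r == kermx (g i r))%MS.

Definition projective (d : nat) str (P : lrep str) : Prop :=
  forall (B C : lrep str) (g : rhom B C) (f : rhom P C),
    is_Rmod d B -> is_Rmod d C -> hsurj g ->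
    exists h : rhom P B, forall i r, h i r *m g i r = f i r.

Definition Ext1_zero (d : nat) str (M N : lrep str) : Prop :=
  forall (E : lrep str) (f : rhom N E) (g : rhom E M),
    is_Rmod d E -> ses f g ->
    exists h : rhom M E, forall i r, h i r *m g i r = 1%:M.

(* Ext^2_R(M,N) = 0, via dimension shifting: Ext^2_R(M,N) = Ext^1_R(Omega M, N)
   for (any) projective presentation 0 -> Omega M -> P -> M -> 0. *)
Definition Ext2_zero (d : nat) str (M N : lrep str) : Prop :=
  forall (L P : lrep str) (f : rhom L P) (g : rhom P M),
    is_Rmod d L -> is_Rmod d P -> projective d P -> ses f g ->
    Ext1_zero d L N.

(* Resizing a matrix, padding with zeros / truncating (used to write identity
   and X_a in layers whose dimension is given by a conditional). *)
Definition mx_resize m n m' n' (B : 'M[K]_(m, n)) : 'M[K]_(m', n') :=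
  \matrix_(p < m', q < n')
    match @insub _ (fun k => (k < m)%N) 'I_m (val p),
          @insub _ (fun k => (k < n)%N) 'I_n (val q) with
    | Some p', Some q' => B p' q'
    | _, _ => 0
    end.

Definition Phi (d : nat) (str : bool) (X : qrep) : lrep str :=
  let dm := fun i r => if (r < d)%N then qdim X i else 0%N in
  @LRep str dm
    (fun i r => @mx_resize _ _ (dm i r) (dm i r.+1) (1%:M : 'M[K]_(qdim X i)))
    (fun a r => @mx_resize _ _ (dm (s a) (lay str r)) (dm (t a) r) (qmap X a)).

End BoundQuiver.

(* Main.v *)
Require Import Defs.
From mathcomp Require Import all_boot all_algebra.
From mathcomp Require Import zify.
Set Implicit Arguments.
Unset Strict Implicit.
Unset Printing Implicit Defensive.
Import GRing.Theory.
Local Open Scope ring_scope.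

Section Gen.
Variables (K : fieldType) (V A : finType) (s t : A -> V).
Local Notation lrep := (lrep K s t).

Definition laym str (f g : V -> nat -> nat) (F : forall i r, 'M[K]_(f i r, g i r.+1))
  (i : V) (r : nat) : 'M[K]_(f i (lay str r), g i (lay str r.+1)) :=
  match str return 'M[K]_(f i (lay str r), g i (lay str r.+1)) with
  | false => F i r | true => F i r.+1 end.

Definition extm str (N M : lrep str)
  (cv : forall i r, 'M[K]_(mdim M i r, mdim N i r.+1))
  (ch : forall a r, 'M[K]_(mdim M (s a) (lay str r), mdim N (t a) r)) : lrep str :=
  @LRep K V A s t str (fun i r => (mdim N i r + mdim M i r)%N)
    (fun i r => block_mx (mvert N i r) 0 (cv i r) (mvert M i r))
    (fun a r => block_mx (mhor N a r) 0 (ch a r) (mhor M a r)).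


Arguments extm {str} N M cv ch.

Definition cocyc d str (N M : lrep str)
  (cv : forall i r, 'M[K]_(mdim M i r, mdim N i r.+1))
  (ch : forall a r, 'M[K]_(mdim M (s a) (lay str r), mdim N (t a) r)) : Prop :=
  forall a r, ((lay str r).+1 < d)%N ->
    ch a r *m mvert N (t a) r + mhor M a r *m cv (t a) r =
    laym str cv (s a) r *m mhor N a r.+1 + laym str (mvert M) (s a) r *m ch a r.+1.


Arguments cocyc d {str} N M cv ch.

Lemma lcommP d str (M : lrep str) :
  lcomm d (mvert M) (mhor M) <->
  (forall a r, ((lay str r).+1 < d)%N ->
     mhor M a r *m mvert M (t a) r = laym str (mvert M) (s a) r *m mhor M a r.+1).
Proof. by case: str M. Qed.

Lemma laym_ext str (N M : lrep str) cv ch i r :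
  laym str (mvert (extm N M cv ch)) i r =
  block_mx (laym str (mvert N) i r) 0 (laym str cv i r) (laym str (mvert M) i r).
Proof. by case: str N M cv ch. Qed.

Lemma extm_Rmod d str (N M : lrep str) cv ch :
  is_Rmod d N -> is_Rmod d M -> cocyc d N M cv ch -> is_Rmod d (extm N M cv ch).
Proof.
move=> [dN cN] [dM cM] cc; split.
  by move=> i r le; rewrite /= dN // dM.
apply/lcommP => a r lt; rewrite laym_ext /= !mulmx_block.
move/lcommP: cN => /(_ a r lt) ->; move/lcommP: cM => /(_ a r lt) ->.
by rewrite cc // !mulmx0 !mul0mx !addr0 !add0r.
Qed.

Lemma laym_hom str (f g : V -> nat -> nat)
  (F : forall i r, 'M[K]_(f i r, f i r.+1)) (G : forall i r, 'M[K]_(g i r, g i r.+1))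
  (H : forall i r, 'M[K]_(f i r, g i r)) :
  (forall i r, F i r *m H i r.+1 = H i r *m G i r) ->
  forall i r, laym str F i r *m H i (lay str r.+1) = H i (lay str r) *m laym str G i r.
Proof. by move=> h i r; case: str; apply: h. Qed.

Lemma hom_vert str (M N : lrep str) (h : rhom M N) i r :
  laym str (mvert M) i r *m h i (lay str r.+1) = h i (lay str r) *m laym str (mvert N) i r.
Proof. by apply: laym_hom => i' r'; case: (hmapP h) => ->. Qed.

Lemma laym_diffl str (f g h : V -> nat -> nat)
  (H : forall i r, 'M[K]_(f i r, g i r)) (C : forall i r, 'M[K]_(g i r, h i r.+1))
  (F : forall i r, 'M[K]_(f i r, f i r.+1)) (G : forall i r, 'M[K]_(f i r, h i r))
  (F' : forall i r, 'M[K]_(h i r, h i r.+1)) :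
  (forall i r, H i r *m C i r = F i r *m G i r.+1 - G i r *m F' i r) ->
  forall i r, H i (lay str r) *m laym str C i r =
     laym str F i r *m G i (lay str r.+1) - G i (lay str r) *m laym str F' i r.
Proof. by move=> e i r; case: str; apply: e. Qed.

Lemma laym_diffr str (f g h : V -> nat -> nat)
  (C : forall i r, 'M[K]_(f i r, g i r.+1)) (H : forall i r, 'M[K]_(g i r, h i r))
  (F : forall i r, 'M[K]_(f i r, f i r.+1)) (G : forall i r, 'M[K]_(f i r, h i r))
  (F' : forall i r, 'M[K]_(h i r, h i r.+1)) :
  (forall i r, C i r *m H i r.+1 = F i r *m G i r.+1 - G i r *m F' i r) ->
  forall i r, laym str C i r *m H i (lay str r.+1) =
     laym str F i r *m G i (lay str r.+1) - G i (lay str r) *m laym str F' i r.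
Proof. by move=> e i r; case: str; apply: e. Qed.

Lemma laym_mull str (f g h : V -> nat -> nat)
  (H : forall i r, 'M[K]_(f i r, g i r)) (C : forall i r, 'M[K]_(g i r, h i r.+1))
  (D : forall i r, 'M[K]_(f i r, h i r.+1)) :
  (forall i r, H i r *m C i r = D i r) ->
  forall i r, H i (lay str r) *m laym str C i r = laym str D i r.
Proof. by move=> e i r; case: str; apply: e. Qed.

Lemma laym_free str (f : V -> nat -> nat) d (F : forall i r, 'M[K]_(f i r, f i r.+1)) :
  (forall i r, (r.+1 < d)%N -> row_free (F i r)) ->
  forall i r, ((lay str r).+1 < d)%N -> row_free (laym str F i r).
Proof. by move=> e i r; case: str; apply: e. Qed.

End Gen.
Arguments extm {K V A s t str} N M cv ch.
Arguments cocyc {K V A s t} d {str} N M cv ch.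
Arguments laym {K V} str {f g} F i r.


Section Alg.
Variable K : fieldType.

Lemma tri (Z : zmodType) (x y z : Z) : (x - y) + (z - x) = z - y.
Proof. by rewrite addrC addrA subrK. Qed.

Lemma ker0 m1 m2 m3 (f : 'M[K]_(m1, m2)) (g : 'M[K]_(m2, m3)) :
  (f == kermx g)%MS -> f *m g = 0.
Proof. by case/andP => /sub_kermxP. Qed.

Lemma factor_through m1 m2 m3 n (f : 'M[K]_(m1, m2)) (g : 'M[K]_(m2, m3))
  (D : 'M[K]_(m2, n)) :
  row_full g -> (f == kermx g)%MS -> f *m D = 0 -> g *m (pinvmx g *m D) = D.
Proof.
move=> gf /andP [_ kf] fD.
have : ((1%:M - g *m pinvmx g) <= kermx g)%MS.
  by apply/sub_kermxP; rewrite mulmxBl mul1mx -mulmxA mulVpmx // mulmx1 subrr.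
move/(submx_trans)/(_ kf)/submxP => [W e].
have : (1%:M - g *m pinvmx g) *m D = 0 by rewrite e -mulmxA fD mulmx0.
by rewrite mulmxBl mul1mx mulmxA => /eqP; rewrite subr_eq0 => /eqP <-.
Qed.

Lemma cancel_full m n p (g : 'M[K]_(m, n)) (X Y : 'M[K]_(n, p)) :
  row_full g -> g *m X = g *m Y -> X = Y.
Proof.
move=> gf e; rewrite -[X]mul1mx -[Y]mul1mx -(mulVpmx gf) -!mulmxA.
by rewrite e.
Qed.

Lemma cancel_free m n p (f : 'M[K]_(n, p)) (X Y : 'M[K]_(m, n)) :
  row_free f -> X *m f = Y *m f -> X = Y.
Proof. by move=> ff; apply: row_free_inj. Qed.

Lemma solve_mono m1 m2 n1 n2 (v : 'M[K]_(m1, m2)) (be : 'M[K]_(n1, n2))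
  (Z : 'M[K]_(m1, n1)) (et : 'M[K]_(m2, n2)) :
  row_free v -> row_full be -> Z *m be = v *m et ->
  v *m (pinvmx v *m Z + (1%:M - pinvmx v *m v) *m et *m pinvmx be) = Z /\
  (pinvmx v *m Z + (1%:M - pinvmx v *m v) *m et *m pinvmx be) *m be = et.
Proof.
move=> /mulmxVp hv /mulVpmx hb e.
move: (pinvmx v) (pinvmx be) hv hb => pv pb hv hb; split.
  by rewrite mulmxDr !mulmxA hv mul1mx mulmxBr mulmx1 mulmxA
     hv mul1mx subrr !mul0mx addr0.
rewrite mulmxDl -!mulmxA hb mulmx1 e mulmxBl mul1mx !mulmxA.
by rewrite addrC subrK.
Qed.

Lemma solve_epi m1 m2 n1 l (v : 'M[K]_(m1, m2)) (f : 'M[K]_(l, n1))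
  (Z : 'M[K]_(n1, m2)) (c : 'M[K]_(l, m1)) :
  row_full v -> row_free f -> f *m Z = c *m v ->
  (pinvmx f *m c + (1%:M - pinvmx f *m f) *m Z *m pinvmx v) *m v = Z /\
  f *m (pinvmx f *m c + (1%:M - pinvmx f *m f) *m Z *m pinvmx v) = c.
Proof.
move=> /mulVpmx hv /mulmxVp hf e.
move: (pinvmx v) (pinvmx f) hv hf => pv pf hv hf; split.
  rewrite mulmxDl -!mulmxA hv mulmx1 -e mulmxBl mul1mx !mulmxA.
  by rewrite addrC subrK.
rewrite mulmxDr !mulmxA hf mul1mx mulmxBr mulmx1 mulmxA hf.
by rewrite mul1mx subrr !mul0mx addr0.
Qed.

End Alg.

Fixpoint arec (T : nat -> Type) (x0 : T 0%N) (st : forall r, T r -> T r.+1) (r : nat) : T r :=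
  match r return T r with 0%N => x0 | r'.+1 => st r' (arec x0 st r') end.

Section Part1.
Variables (K : fieldType) (V A : finType) (s t : A -> V).
Local Notation lrep := (lrep K s t).

Lemma laym_mulr str (f g h : V -> nat -> nat)
  (C : forall i r, 'M[K]_(f i r, g i r.+1)) (H : forall i r, 'M[K]_(g i r, h i r))
  (D : forall i r, 'M[K]_(f i r, h i r.+1)) :
  (forall i r, C i r *m H i r.+1 = D i r) ->
  forall i r, laym str C i r *m H i (lay str r.+1) = laym str D i r.
Proof. by move=> e i r; case: str; apply: e. Qed.

Lemma part1 d str (P M L : lrep str) (f : rhom L P) (g : rhom P M) :
  is_Rmod d P -> is_Rmod d M -> projective d P -> ses f g ->
  (forall i r, (r.+1 < d)%N -> row_free (mvert M i r)) -> projective d L.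
Proof.
move=> HP HM Pproj [finj [gsurj fker]] Mmono B C be phi HB HC bsurj.
have [fv fh] := hmapP f; have [gv gh] := hmapP g.
have [phv phh] := hmapP phi; have [bv bh] := hmapP be.
have [_ cP] := HP; have [_ cC] := HC; have [_ cM] := HM; have [_ cB] := HB.
move/lcommP: cP => cP; move/lcommP: cC => cC.
pose Phi0 i r := pinvmx (f i r) *m phi i r.
have fPhi0 i r : f i r *m Phi0 i r = phi i r.
  by rewrite /Phi0 mulmxA mulmxVp ?mul1mx.
clearbody Phi0.
pose cv i r := pinvmx (g i r) *m
  (mvert P i r *m Phi0 i r.+1 - Phi0 i r *m mvert C i r).
pose ch a r := pinvmx (g (s a) (lay str r)) *m
  (mhor P a r *m Phi0 (t a) r - Phi0 (s a) (lay str r) *m mhor C a r).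
have gcv i r : g i r *m cv i r =
    mvert P i r *m Phi0 i r.+1 - Phi0 i r *m mvert C i r.
  apply: factor_through => //.
  by rewrite mulmxBr !mulmxA -fv -[mvert L i r *m _ *m _]mulmxA !fPhi0 phv subrr.
have gch a r : g (s a) (lay str r) *m ch a r =
    mhor P a r *m Phi0 (t a) r - Phi0 (s a) (lay str r) *m mhor C a r.
  apply: factor_through => //.
  by rewrite mulmxBr !mulmxA -fh -[mhor L a r *m _ *m _]mulmxA !fPhi0 phh subrr.
clearbody cv ch.
have coc2 : cocyc d C M cv ch.
  move=> a r lt; apply: (cancel_full (gsurj (s a) (lay str r))).
  rewrite !mulmxDr !mulmxA gch -gh -mulmxA gcv.
  rewrite (laym_diffl str gcv) -hom_vert -[_ *m g _ _ *m _]mulmxA gch.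
  rewrite !mulmxBl !mulmxBr !mulmxA !tri cP // -!mulmxA cC //.
pose cv' i r := cv i r *m pinvmx (be i r.+1).
have cv'b i r : cv' i r *m be i r.+1 = cv i r.
  by rewrite /cv' -mulmxA mulVpmx ?mulmx1.
clearbody cv'.
pose T a r := 'M[K]_(mdim M (s a) (lay str r), mdim B (t a) r).
pose st a r (X : T a r) : T a r.+1 :=
  if ((lay str r).+1 < d)%N then
    pinvmx (laym str (mvert M) (s a) r) *m
      (X *m mvert B (t a) r + mhor M a r *m cv' (t a) r
        - laym str cv' (s a) r *m mhor B a r.+1)
    + (1%:M - pinvmx (laym str (mvert M) (s a) r) *m laym str (mvert M) (s a) r)
      *m ch a r.+1 *m pinvmx (be (t a) r.+1)
  else ch a r.+1 *m pinvmx (be (t a) r.+1).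
pose ch' a := arec (T := T a) (ch a 0%N *m pinvmx (be (t a) 0%N)) (st a).
have Zbe a r (X : T a r) : ((lay str r).+1 < d)%N -> X *m be (t a) r = ch a r ->
  (X *m mvert B (t a) r + mhor M a r *m cv' (t a) r
        - laym str cv' (s a) r *m mhor B a r.+1) *m be (t a) r.+1
  = laym str (mvert M) (s a) r *m ch a r.+1.
  move=> lt Xb; rewrite mulmxBl mulmxDl -!mulmxA bv bh cv'b !mulmxA Xb.
  rewrite (laym_mulr str cv'b) coc2 //.
  by rewrite [X in X - _]addrC addrK.
have ch'b a r : ch' a r *m be (t a) r = ch a r.
  elim: r => [|r IH]; first by rewrite /ch' /= -mulmxA mulVpmx ?mulmx1.
  have -> : ch' a r.+1 = st a r (ch' a r) by [].
  rewrite /st; case: ifP => lt; last by rewrite -mulmxA mulVpmx ?mulmx1.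
  by have [_ ->] := solve_mono (laym_free Mmono (s a) lt) (bsurj _ _) (Zbe a r _ lt IH).
have coc1 : cocyc d B M cv' ch'.
  move=> a r lt.
  have -> : ch' a r.+1 = st a r (ch' a r) by [].
  rewrite /st ifT //.
  have [-> _] := solve_mono (laym_free Mmono (s a) lt) (bsurj _ _) (Zbe a r _ lt (ch'b a r)).
  by rewrite [RHS]addrC subrK.
clearbody ch'.
have bmP : is_hom (M := extm B M cv' ch') (N := extm C M cv ch)
    (fun i r => block_mx (be i r) 0 0 1%:M).
  split => [i r|a r] /=; rewrite !mulmx_block !mulmx0 !mul0mx !mulmx1 !mul1mx
    !addr0 !add0r ?bv ?bh ?cv'b ?ch'b //.
pose bm := Defs.Hom bmP.
have bms : hsurj bm.
  move=> i r; apply/row_fullP; exists (block_mx (pinvmx (be i r)) 0 0 1%:M).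
  by rewrite /= mulmx_block !mulmx0 !mul0mx !mulmx1 !addr0 !add0r mulVpmx //
    -scalar_mx_block.
have qP : is_hom (M := P) (N := extm C M cv ch)
    (fun i r => row_mx (Phi0 i r) (g i r)).
  split => [i r|a r] /=; rewrite mul_mx_row mul_row_block !mulmx0 !add0r.
    by rewrite gcv addrC subrK gv.
  by rewrite gch addrC subrK gh.
pose q := Defs.Hom qP.
have [chi hchi] := Pproj _ _ bm q (extm_Rmod HB HM coc1) (extm_Rmod HC HM coc2) bms.
have chiE i r : chi i r = row_mx (lsubmx (chi i r)) (rsubmx (chi i r)).
  by rewrite hsubmxK.
have hc i r : lsubmx (chi i r) *m be i r = Phi0 i r /\ rsubmx (chi i r) = g i r.
  have e := hchi i r; rewrite /= [chi i r]chiE mul_row_block !mulmx0 !mulmx1 in e.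
  by rewrite addr0 add0r in e; case/eq_row_mx: e.
have [cv1 ch1] := hmapP chi.
have hv i r : mvert P i r *m lsubmx (chi i r.+1) =
    lsubmx (chi i r) *m mvert B i r + g i r *m cv' i r.
  have e := cv1 i r; rewrite /= [chi i r.+1]chiE [chi i r]chiE mul_mx_row in e.
  by rewrite mul_row_block (hc i r).2 in e; case/eq_row_mx: e => -> _.
have hh a r : mhor P a r *m lsubmx (chi (t a) r) =
    lsubmx (chi (s a) (lay str r)) *m mhor B a r + g (s a) (lay str r) *m ch' a r.
  have e := ch1 a r; rewrite /= [chi (t a) r]chiE [chi (s a) (lay str r)]chiE mul_mx_row in e.
  by rewrite mul_row_block (hc (s a) (lay str r)).2 in e; case/eq_row_mx: e => -> _.
have psiP : is_hom (M := L) (N := B) (fun i r => f i r *m lsubmx (chi i r)).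
  split => [i r|a r].
    rewrite mulmxA fv -[f i r *m mvert P i r *m _]mulmxA hv mulmxDr.
    by rewrite [f i r *m (g i r *m _)]mulmxA (ker0 (fker i r)) mul0mx addr0 mulmxA.
  rewrite mulmxA fh -[f _ _ *m mhor P a r *m _]mulmxA hh mulmxDr.
  by rewrite [f _ _ *m (g _ _ *m _)]mulmxA (ker0 (fker _ _)) mul0mx addr0 mulmxA.
exists (Defs.Hom psiP) => i r /=.
by rewrite -mulmxA (hc i r).1 fPhi0.
Qed.
End Part1.

Fixpoint drec (T : nat -> Type) (base : forall r, T r) (st : forall r, T r.+1 -> T r)
  (n r : nat) : T r :=
  match n with 0%N => base r | n'.+1 => st r (drec base st n' r.+1) end.

Lemma alg2 (Z : zmodType) (a b c : Z) : (a - b) - (a - c) = c - b.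
Proof. by rewrite opprB tri. Qed.

Lemma fsol (K : fieldType) l n1 m1 m2 (f : 'M[K]_(l, n1)) (c : 'M[K]_(l, m1))
  (Z : 'M[K]_(n1, m2)) (Q : 'M[K]_(m2, m1)) :
  row_free f -> f *m (pinvmx f *m c + (1%:M - pinvmx f *m f) *m Z *m Q) = c.
Proof.
move=> /mulmxVp hf; move: (pinvmx f) hf => pf hf.
by rewrite mulmxDr !mulmxA hf mul1mx mulmxBr mulmx1 mulmxA hf mul1mx subrr !mul0mx addr0.
Qed.

Section Part2.
Variables (K : fieldType) (V A : finType) (s t : A -> V).
Local Notation lrep := (lrep K s t).

Lemma part2 d str (P L Y : lrep str) (f : rhom L P) :
  is_Rmod d P -> is_Rmod d L -> is_Rmod d Y -> projective d P -> hinj f ->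
  (forall i r, (r.+1 < d)%N -> row_full (mvert Y i r)) -> Ext1_zero d L Y.
Proof.
move=> HP HL HY Pproj finj Yepi E f' p HE [f'inj [psurj f'ker]].
have [fv fh] := hmapP f; have [f'v f'h] := hmapP f'; have [pv ph] := hmapP p.
have [_ cP] := HP; have [_ cL] := HL; have [_ cE] := HE; have [_ cY] := HY.
move/lcommP: cP => cP; move/lcommP: cL => cL; move/lcommP: cE => cE.
pose S i r := pinvmx (p i r).
have Sp i r : S i r *m p i r = 1%:M by rewrite mulVpmx.
clearbody S.
have kf m i r (D : 'M[K]_(m, mdim E i r)) : D *m p i r = 0 ->
    D *m pinvmx (f' i r) *m f' i r = D.
  move=> Dp; apply: mulmxKpV; case/andP: (f'ker i r) => _; apply: submx_trans.
  by apply/sub_kermxP.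
pose cv i r := (mvert L i r *m S i r.+1 - S i r *m mvert E i r) *m pinvmx (f' i r.+1).
pose ch a r := (mhor L a r *m S (t a) r - S (s a) (lay str r) *m mhor E a r)
   *m pinvmx (f' (t a) r).
have cvf i r : cv i r *m f' i r.+1 = mvert L i r *m S i r.+1 - S i r *m mvert E i r.
  apply: kf; rewrite mulmxBl -!mulmxA Sp pv mulmxA Sp mulmx1 mul1mx subrr //.
have chf a r : ch a r *m f' (t a) r =
    mhor L a r *m S (t a) r - S (s a) (lay str r) *m mhor E a r.
  apply: kf; rewrite mulmxBl -!mulmxA Sp ph mulmxA Sp mulmx1 mul1mx subrr //.
clearbody cv ch.
have cocL : cocyc d Y L cv ch.
  move=> a r lt; apply: (cancel_free (f'inj (t a) r.+1)).
  rewrite !mulmxDl -!mulmxA f'v cvf f'h chf !mulmxA chf (laym_diffr str cvf).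
  rewrite !mulmxBl !mulmxBr !mulmxA !tri cL // -!mulmxA cE //.
pose c'v i r := pinvmx (f i r) *m cv i r.
have fc'v i r : f i r *m c'v i r = cv i r by rewrite /c'v mulmxA mulmxVp ?mul1mx.
clearbody c'v.
pose T a r := 'M[K]_(mdim P (s a) (lay str r), mdim Y (t a) r).
pose base a r : T a r := pinvmx (f (s a) (lay str r)) *m ch a r.
pose st a r (Xn : T a r.+1) : T a r :=
  if ((lay str r).+1 < d)%N then
    pinvmx (f (s a) (lay str r)) *m ch a r +
    (1%:M - pinvmx (f (s a) (lay str r)) *m f (s a) (lay str r)) *m
      (laym str c'v (s a) r *m mhor Y a r.+1 + laym str (mvert P) (s a) r *m Xn
        - mhor P a r *m c'v (t a) r) *m pinvmx (mvert Y (t a) r)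
  else base a r.
pose c'h a r := drec (base a) (st a) (d - r) r.
have fX a r : f (s a) (lay str r) *m c'h a r = ch a r.
  suff gen n r' : f (s a) (lay str r') *m drec (base a) (st a) n r' = ch a r'.
    exact: gen.
  case: n => [|n] /=.
    by rewrite /base mulmxA mulmxVp ?mul1mx.
  rewrite /st; case: ifP => _; first exact: fsol.
  by rewrite /base mulmxA mulmxVp ?mul1mx.
have Xrec a r : ((lay str r).+1 < d)%N -> c'h a r = st a r (c'h a r.+1).
  move=> lt; rewrite /c'h.
  have : (r <= lay str r)%N by rewrite /lay; case: ifP.
  move=> hl; have -> : (d - r = (d - r.+1).+1)%N by lia.
  by [].
have Xv a r : ((lay str r).+1 < d)%N ->
  c'h a r *m mvert Y (t a) r = laym str c'v (s a) r *m mhor Y a r.+1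
     + laym str (mvert P) (s a) r *m c'h a r.+1 - mhor P a r *m c'v (t a) r.
  move=> lt; rewrite Xrec // {1}/st ifT //.
  have : (r <= lay str r)%N by rewrite /lay; case: ifP.
  move=> hl; have ltr : (r.+1 < d)%N by lia.
  apply: (fun e => proj1 (solve_epi (Yepi (t a) r ltr) (finj (s a) (lay str r)) e)).
  rewrite mulmxBr mulmxDr !mulmxA (laym_mull str fc'v) -hom_vert -fh.
  rewrite -[_ *m f _ _ *m c'h _ _]mulmxA fX -mulmxA fc'v.
  by rewrite -cocL // addrK.
have cocG : cocyc d Y P c'v c'h.
  by move=> a r lt; rewrite Xv // subrK.
clearbody c'h.
have piP : is_hom (M := extm Y P c'v c'h) (N := P)
    (fun i r => col_mx (0 : 'M[K]_(mdim Y i r, mdim P i r)) 1%:M).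
  split => [i r|a r] /=; rewrite mul_block_col mul_col_mx !mulmx0 !mul0mx
    !mulmx1 !mul1mx !addr0 !add0r //.
pose pi := Defs.Hom piP.
have pis : hsurj pi.
  move=> i r; apply/row_fullP; exists (row_mx 0 1%:M).
  by rewrite /= mul_row_col mulmx0 mulmx1 add0r.
have idP : is_hom (M := P) (N := P) (fun i r => 1%:M).
  by split => *; rewrite mulmx1 mul1mx.
have [sec hsec] := Pproj _ _ pi (Defs.Hom idP) (extm_Rmod HY HP cocG) HP pis.
have secE i r : sec i r = row_mx (lsubmx (sec i r)) (rsubmx (sec i r)).
  by rewrite hsubmxK.
have s2 i r : rsubmx (sec i r) = 1%:M.
  have e := hsec i r; rewrite /= [sec i r]secE mul_row_col mulmx0 mulmx1 add0r in e.
  exact: e.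
have [sv sh] := hmapP sec.
have hv i r : mvert P i r *m lsubmx (sec i r.+1) =
    lsubmx (sec i r) *m mvert Y i r + c'v i r.
  have e := sv i r; rewrite /= [sec i r.+1]secE [sec i r]secE mul_mx_row in e.
  by rewrite mul_row_block !s2 !mul1mx in e; case/eq_row_mx: e => -> _.
have hh a r : mhor P a r *m lsubmx (sec (t a) r) =
    lsubmx (sec (s a) (lay str r)) *m mhor Y a r + c'h a r.
  have e := sh a r; rewrite /= [sec (t a) r]secE [sec (s a) (lay str r)]secE mul_mx_row in e.
  by rewrite mul_row_block !s2 !mul1mx in e; case/eq_row_mx: e => -> _.
have hP : is_hom (M := L) (N := E)
    (fun i r => S i r - f i r *m lsubmx (sec i r) *m f' i r).
  split => [i r|a r].
    rewrite mulmxBr mulmxBl !mulmxA fv -[f i r *m mvert P i r *m _]mulmxA hv.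
    rewrite mulmxDr mulmxDl fc'v cvf -!mulmxA f'v !mulmxA.
    by rewrite opprD addrA alg2.
  rewrite mulmxBr mulmxBl !mulmxA fh -[f _ _ *m mhor P a r *m _]mulmxA hh.
  rewrite mulmxDr mulmxDl fX chf -!mulmxA f'h !mulmxA.
  by rewrite opprD addrA alg2.
exists (Defs.Hom hP) => i r /=.
by rewrite mulmxBl Sp -[_ *m f' i r *m _]mulmxA (ker0 (f'ker i r)) mulmx0 subr0.
Qed.
End Part2.

Section Fin.
Variable K : fieldType.

Lemma resize_id m n (B : 'M[K]_(m, n)) : @mx_resize K m n m n B = B.
Proof.
apply/matrixP => i j; rewrite /mx_resize mxE.
case: insubP => [i' _ ei|]; last by rewrite ltn_ord.
case: insubP => [j' _ ej|]; last by rewrite ltn_ord.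
by rewrite (val_inj ei) (val_inj ej).
Qed.

Lemma resize1 m m1 m2 : m1 = m -> m2 = m ->
  row_free (@mx_resize K m m m1 m2 (1%:M : 'M[K]_m)) /\
  row_full (@mx_resize K m m m1 m2 (1%:M : 'M[K]_m)).
Proof. by move=> -> ->; rewrite resize_id row_free_unit row_full_unit unitmx1. Qed.

Lemma row_free_mull m n p (A : 'M[K]_(m, n)) (B : 'M[K]_(n, p)) :
  row_free (A *m B) -> row_free A.
Proof.
rewrite /row_free => /eqP e; rewrite eqn_leq rank_leq_row.
by rewrite -{1}e mxrankM_maxl.
Qed.

Lemma row_full_mulr m n p (A : 'M[K]_(m, n)) (B : 'M[K]_(n, p)) :
  row_full (A *m B) -> row_full B.
Proof.
rewrite /row_full => /eqP e; rewrite eqn_leq rank_leq_col.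
by rewrite -{1}e mxrankM_maxr.
Qed.

Variables (V A : finType) (s t : A -> V).

Lemma phi_vert d str (X : qrep K s t) i r : (r.+1 < d)%N ->
  row_free (mvert (Phi d str X) i r) /\ row_full (mvert (Phi d str X) i r).
Proof.
move=> lt; rewrite /Phi /=; apply: resize1; rewrite ifT //; lia.
Qed.

End Fin.

Unset Implicit Arguments.
Local Close Scope ring_scope.

Theorem lemma2p18 (V0 A0 : finType) (s t : A0 -> V0) (str : bool) (d : nat)
  (hd : (if str then 2 <= d else 1 <= d)%N)
  (X S : qrep CC s t)
  (Vsub W T Y : lrep CC s t str)
  (iV : rhom Vsub (Phi d str X)) (iW : rhom W (Phi d str S))
  (pY : rhom (Phi d str X) Y) :
  is_Rmod d Vsub -> is_Rmod d W -> is_Rmod d T -> is_Rmod d Y ->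
  hinj iV -> hinj iW -> ses iV pY ->
  Ext2_zero d W T /\ Ext2_zero d T Y.
Proof.
move=> HV HW HT HY iVinj iWinj [_ [pYsurj _]].
have Wmono i r : (r.+1 < d)%N -> row_free (mvert W i r).
  move=> lt; have [hv _] := hmapP iW; have [pf _] := @phi_vert _ _ _ _ _ d str S i r lt.
  apply: (@row_free_mull _ _ _ _ _ (iW i r.+1)).
  by rewrite /row_free hv mxrankMfree //; apply: iWinj.
have Yepi i r : (r.+1 < d)%N -> row_full (mvert Y i r).
  move=> lt; have [hv _] := hmapP pY; have [_ pf] := @phi_vert _ _ _ _ _ d str X i r lt.
  apply: (@row_full_mulr _ _ _ _ (pY i r)).
  by rewrite /row_full -hv (eqmxMfull _ pf); apply: pYsurj.
split.
  move=> L P f g HL HP Pproj hses.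
  have Lproj := part1 HP HW Pproj hses Wmono.
  move=> E f' p HE [_ [psurj _]].
  have idP : is_hom (M := L) (N := L) (fun i r => (1%:M)%R).
    by split => *; rewrite mulmx1 mul1mx.
  have [h hh] := Lproj E L p (Defs.Hom idP) HE HL psurj.
  by exists h => i r; rewrite hh.
move=> L P f g HL HP Pproj [finj _].
exact: part2 HP HL HY Pproj finj Yepi.
Qed.
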